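(* Let $n\ge1$, $\mathbf x\in[0,1]^n$, $n_1=|\{i:x_i\in[0,\tfrac12]\}|$, $n_2=|\{i:x_i\in(\tfrac12,1]\}|$, and let the Majority Vote mechanism output $y=0$ if $n_1\le n_2$ and $y=1$ otherwise. Then for every $1\le p<\infty$, $$\Big(\sum_i(1-|x_i-y|)^p\Big)^{1/p}\le(2^p+1)^{1/p}\min_{z\in[0,1]}\Big(\sum_i(1-|x_i-z|)^p\Big)^{1/p},$$ and $\max_i(1-|x_i-y|)\le 2\min_{z\in[0,1]}\max_i(1-|x_i-z|)$. That is, Majority Vote is a $(2^p+1)^{1/p}$-approximation for the $L_p$ social cost for $1\le p<\infty$ and a $2$-approximation for the $L_\infty$ social cost (maximum cost).
   Context: Obnoxious facility location on $[0,1]$: agent $i$ at $x_i$ incurs cost $c(x_i,y)=1-|x_i-y|$ from a facility at $y$. $L_p$ social cost: $\mathrm{sc}_p(y,\mathbf x)=(\sum_ic(x_i,y)^p)^{1/p}$, and $\mathrm{sc}_\infty(y,\mathbf x)=\max_ic(x_i,y)$; to be minimized. *)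

(* Defs.v *)
(* R : realType, real exponent via powR (`^),
   which satisfies 0 `^ p = 0 for p <> 0. *)
From HB Require Import structures.
From mathcomp Require Import all_boot all_order all_algebra.
From mathcomp Require Import all_classical all_reals.
From mathcomp Require Import exp.
Set Implicit Arguments. Unset Strict Implicit. Unset Printing Implicit Defensive.
Import Order.TTheory GRing.Theory Num.Theory.
Local Open Scope ring_scope.

(* cost of agent at a from obnoxious facility at y *)
Definition cost {R : realType} (a y : R) : R := 1 - `|a - y|.

Definition scp {R : realType} {n : nat} (p : R) (x : 'I_n -> R) (y : R) : R :=
  (\sum_(i < n) (cost (x i) y) `^ p) `^ (p^-1).

(* L_oo social cost: maximum cost (costs are >= 0 on [0,1], n >= 1) *)
Definition scinf {R : realType} {n : nat} (x : 'I_n -> R) (y : R) : R :=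
  \big[Num.max/0]_(i < n) cost (x i) y.

Definition n_left {R : realType} {n : nat} (x : 'I_n -> R) : nat :=
  #|[set i : 'I_n | (0 <= x i) && (x i <= 2^-1)]|.
Definition n_right {R : realType} {n : nat} (x : 'I_n -> R) : nat :=
  #|[set i : 'I_n | (2^-1 < x i) && (x i <= 1)]|.

Definition majority_vote {R : realType} {n : nat} (x : 'I_n -> R) : R :=
  if (n_left x <= n_right x)%N then 0 else 1.

(* Main.v *)
Require Import Defs.
From HB Require Import structures.
From mathcomp Require Import all_boot all_order all_algebra.
From mathcomp Require Import all_classical all_reals.
From mathcomp Require Import exp.
From mathcomp Require Import lra.
Import Order.TTheory GRing.Theory Num.Theory.
Local Open Scope ring_scope.

Lemma key (R : realType) n (x : 'I_n -> R) (y z : R) (N K : {set 'I_n}) :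
  (#|N| <= #|K|)%N ->
  (forall i, 0 <= cost (x i) y <= 1) ->
  (forall i, 0 <= cost (x i) z) ->
  (forall i, i \notin N -> cost (x i) y <= cost (x i) z) ->
  (forall i, i \in K -> 2^-1 <= cost (x i) z) ->
  (forall p : R, 1 <= p -> scp p x y <= (2 `^ p + 1) `^ (p^-1) * scp p x z)
  /\ scinf x y <= 2 * scinf x z.
Proof.
move=> NK cy cz yz Kz; split.
  move=> p p1; have p0 : 0 <= p by lra.
  rewrite /scp.
  set T := \sum_(i < n) cost (x i) z `^ p.
  have T0 : 0 <= T by apply: sumr_ge0 => i _; exact: powR_ge0.
  have h1 : \sum_(i < n) cost (x i) y `^ p <= #|N|%:R + T.
    have -> : (#|N|%:R : R) = \sum_(i < n) (if i \in N then 1 else 0).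
      by rewrite -big_mkcond /= sumr_const.
    rewrite /T -big_split /=; apply: ler_sum => i _.
    case: ifP => iN.
      have := cy i => /andP[c0 c1].
      have : cost (x i) y `^ p <= 1 `^ p.
        by apply: ge0_ler_powR => //; rewrite nnegrE.
      rewrite powR1 => h; have := powR_ge0 (cost (x i) z) p; lra.
    rewrite add0r; apply: ge0_ler_powR => //; rewrite ?nnegrE.
    - by have := cy i => /andP[].
    - exact: cz.
    - by apply: yz; rewrite iN.
  have h2 : (#|K|%:R : R) <= 2 `^ p * T.
    have -> : (#|K|%:R : R) = \sum_(i < n) (if i \in K then 1 else 0).
      by rewrite -big_mkcond /= sumr_const.
    rewrite /T mulr_sumr; apply: ler_sum => i _.
    case: ifP => iK.
      have c0 := cz i; rewrite -powRM //.
      have h := Kz i iK.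
      have : 1 `^ p <= (2 * cost (x i) z) `^ p.
        by apply: ge0_ler_powR => //; rewrite ?nnegrE; lra.
      by rewrite powR1.
    by apply: mulr_ge0; exact: powR_ge0.
  have h3 : (#|N|%:R : R) <= #|K|%:R by rewrite ler_nat.
  have g0 : 0 <= 2 `^ p + 1 by have := powR_ge0 2 p; lra.
  rewrite -powRM //.
  apply: ge0_ler_powR; rewrite ?nnegrE.
  - by rewrite invr_ge0.
  - by apply: sumr_ge0 => i _; exact: powR_ge0.
  - by apply: mulr_ge0 => //; have := powR_ge0 2 p; lra.
  - lra.
rewrite /scinf.
have s0 : 0 <= \big[Num.max/0]_(i < n) cost (x i) z by exact: bigmax_ge_id.
apply: bigmax_le; first lra.
move=> i _.
case: (boolP (i \in N)) => iN; last first.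
  have := yz i iN; have := le_bigmax 0 (fun i => cost (x i) z) i; lra.
have : (0 < #|K|)%N by apply: leq_trans NK; apply/card_gt0P; exists i.
move=> /card_gt0P [k kK].
have := Kz k kK; have := le_bigmax 0 (fun i => cost (x i) z) k.
have := cy i; move=> /andP[? ?] /=; lra.
Qed.

Lemma cost_bounds (R : realType) (a b : R) : 0 <= a <= 1 -> 0 <= b <= 1 ->
  0 <= cost a b <= 1.
Proof.
move=> /andP[? ?] /andP[? ?]; rewrite /cost.
case: (lerP 0 (a - b)) => h; [rewrite ger0_norm // | rewrite ltr0_norm //];
  apply/andP; split; lra.
Qed.

Ltac nrm a b := case: (lerP 0 (a - b)) => ?;
  [rewrite (ger0_norm (x := a - b)) // | rewrite (ltr0_norm (x := a - b)) //].

Theorem theorem10 (R : realType) (n : nat) (x : 'I_n -> R) :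
  (0 < n)%N ->
  (forall i, 0 <= x i <= 1) ->
  (forall p : R, 1 <= p ->
     forall z : R, 0 <= z <= 1 ->
       scp p x (majority_vote x) <= (2 `^ p + 1) `^ (p^-1) * scp p x z)
  /\
  (forall z : R, 0 <= z <= 1 ->
       scinf x (majority_vote x) <= 2 * scinf x z).
Proof.
move=> n0 hx.
set L := [set i : 'I_n | (0 <= x i) && (x i <= 2^-1)].
set Rr := [set i : 'I_n | (2^-1 < x i) && (x i <= 1)].
have inL i : (i \in L) = (x i <= 2^-1).
  by rewrite inE; have := hx i => /andP[-> _].
have inR i : (i \in Rr) = (2^-1 < x i).
  by rewrite inE; have := hx i => /andP[_ ->]; rewrite andbT.
suff H : forall z, 0 <= z <= 1 ->
  (forall p : R, 1 <= p -> scp p x (majority_vote x) <= (2 `^ p + 1) `^ (p^-1) * scp p x z)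
  /\ scinf x (majority_vote x) <= 2 * scinf x z.
  by split => [p p1 z hz|z hz]; have [H1 H2] := H z hz => //; exact: H1.
move=> z hz.
have zb : 0 <= z <= 1 := hz.
have b0 : 0 <= (0:R) <= 1 by rewrite lexx ler01.
have b1 : 0 <= (1:R) <= 1 by rewrite lexx ler01.
pose K := if z <= 2^-1 then L else Rr.
have Kz i : i \in K -> 2^-1 <= cost (x i) z.
  rewrite /K; have := hx i; move: hz => /andP[? ?] /andP[? ?].
  rewrite /cost; case: ifP => hz; rewrite ?inL ?inR => hi; nrm (x i) z; lra.
have cz i : 0 <= cost (x i) z by have /andP[] := @cost_bounds _ _ _ (hx i) hz.
rewrite /majority_vote /n_left /n_right -/L -/Rr.
case: leqP => hc.
  apply: (@key _ _ x _ z L K) => //.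
  - by rewrite /K; case: ifP.
  - by move=> i; exact: (@cost_bounds _ _ _ (hx i)).
  - move=> i; rewrite inL -ltNge => hi; rewrite /cost.
    have := hx i; move: hz => /andP[? ?] /andP[? ?]; nrm (x i) z; nrm (x i) (0:R); lra.
apply: (@key _ _ x _ z Rr K) => //.
- by rewrite /K; case: ifP => _ //; apply: ltnW.
- by move=> i; exact: (@cost_bounds _ _ _ (hx i)).
- move=> i; rewrite inR -leNgt => hi; rewrite /cost.
  have := hx i; move: hz => /andP[? ?] /andP[? ?]; nrm (x i) z; nrm (x i) (1:R); lra.
Qed.
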